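(* Let $d$ and $m$ be positive integers with $m\ge 3$ and $m>2^{d-1}$. Let $w$ be a vertex of $\Gamma_m^*$ (defined below) with $\mathrm{d}((x_1,0),w)=d$ in $\Gamma_m^*$. Write $w=(x_{\beta_1}+\dots+x_{\beta_s},0)$ with $\beta_1<\dots<\beta_s$ (the unique expression of the first coordinate in the basis $x_1,\dots,x_m$). Then every index $n\in\{\beta_1,\dots,\beta_s\}$ satisfies $n\le 2^{d-1}+1$.
   Context: For an integer $m\ge 3$, let $V_m$ and $W_m$ be vector spaces over $\mathrm{GF}(2)$ of dimensions $m$ and $m-2$, with ordered bases $x_1,\dots,x_m$ and $y_1,\dots,y_{m-2}$ respectively. Let $f_m:V_m\times V_m\to W_m$ be the bilinear map determined on basis vectors by $f_m(x_i,x_j)=0$ if $j\in\{i,i+1\}$, $f_m(x_i,x_j)=y_{j-i-1}$ if $i+2\le j\le m$, and $f_m(x_i,x_j)=0$ if $i>j$. The group $H_m$ has underlying set $V_m\times W_m$ with multiplication $(a,b)\cdot(c,d)=(a+c,\ f_m(a,c)+b+d)$; its identity is $(0,0)$. The graph $\Gamma_m^*$ has as vertex set the non-identity elements of $X=\{(v,0)\mid v\in V_m\}$, two distinct vertices being adjacent if and only if they commute in $H_m$; $\mathrm{d}(\cdot,\cdot)$ denotes graph distance in $\Gamma_m^*$. *)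

(* Defs.v *)
From mathcomp Require Import all_boot all_order all_algebra.
Set Implicit Arguments. Unset Strict Implicit. Unset Printing Implicit Defensive.
Import GRing.Theory.
Local Open Scope ring_scope.

(* V_m = GF(2)^m as row vectors; basis vector x_(i+1) is the i-th unit
   row vector (0-based index i : 'I_m).  W_m = GF(2)^(m-2). *)
Definition Vm (m : nat) := 'rV['F_2]_m.
Definition Wm (m : nat) := 'rV['F_2]_(m - 2).

(* y_(k+1), 0-based index k *)
Definition ybasis (m k : nat) : Wm m := \row_(l < m - 2) ((l : nat) == k)%:R.

(* f_m on basis vectors (0-based indices): f(x_i, x_j) = y_(j-i-1) in
   1-based indexing, i.e. 0-based y index j - i - 2, when i + 2 <= j; else 0. *)
Definition fbasis (m : nat) (i j : 'I_m) : Wm m :=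
  if (i.+2 <= j)%N then ybasis m (j - i - 2) else 0.

Definition fm (m : nat) (a c : Vm m) : Wm m :=
  \sum_(i < m) \sum_(j < m) (a 0 i * c 0 j) *: fbasis i j.

Definition Hmul (m : nat) (g h : Vm m * Wm m) : Vm m * Wm m :=
  (g.1 + h.1, fm g.1 h.1 + g.2 + h.2).

(* adjacency in Gamma_m^*: vertices are (v,0) with v <> 0 *)
Definition is_vertex (m : nat) (v : Vm m) : bool := v != 0.

Definition gadj (m : nat) : rel (Vm m) := fun u v =>
  [&& is_vertex u, is_vertex v, u != v &
      Hmul (u, 0) (v, 0) == Hmul (v, 0) (u, 0)].

Definition walk_len (m : nat) (u w : Vm m) (k : nat) : Prop :=
  exists p : seq (Vm m), [/\ size p = k, path (@gadj m) u p & last u p = w].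

Definition gdist_eq (m : nat) (u w : Vm m) (k : nat) : Prop :=
  walk_len u w k /\ forall k', (k' < k)%N -> ~ walk_len u w k'.

Definition x1 (m : nat) : Vm m := \row_(l < m) ((l : nat) == 0%N)%:R.

(* Main.v *)
Require Import Defs.
From mathcomp Require Import all_boot all_order all_algebra.
From mathcomp Require Import zify.
Import GRing.Theory.
Local Open Scope ring_scope.

Definition bounded {m} (u : Vm m) N := forall n : 'I_m, u 0 n != 0 -> (n < N)%N.

Lemma fm_entry m (u v : Vm m) (l : 'I_(m-2)) : fm u v 0 l =
  \sum_(i < m) \sum_(j < m) (u 0 i * v 0 j) *
     (if (i.+2 <= j)%N && (l == (j - i - 2)%N :> nat) then 1 else 0).
Proof.
rewrite /fm summxE; apply eq_bigr => i _; rewrite summxE; apply eq_bigr => j _.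
rewrite mxE /fbasis; case: ifP => _ /=; rewrite !mxE //.
by case: eqP.
Qed.

Lemma adj_comm {m} {u v : Vm m} : gadj u v -> fm u v = fm v u.
Proof.
case/and4P => _ _ _ /eqP; rewrite /Hmul /= => -[_]; by rewrite !addr0.
Qed.
Lemma step m (u v : Vm m) N : (0 < N)%N -> bounded u N -> gadj u v ->
  bounded v (maxn 2 (N.*2.-1)).
Proof.
move=> N0 bu adj n vn.
case: (ltnP n (maxn 2 (N.*2.-1))) => // hn; exfalso.
have hc := adj_comm adj.
case/and4P: adj => uv _ _ _.
have [i0 ui0] : exists i, u 0 i != 0.
  case: (pickP (fun i => u 0 i != 0)) => [i ui | h]; first by exists i.
  by move/eqP: uv; case; apply/rowP => k; rewrite mxE; move: (h k) => /negbFE/eqP.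
case: (@arg_minnP _ i0 (fun i => u 0 i != 0) (fun i : 'I_m => i : nat) ui0) => c uc cmin.
case: (@arg_maxnP _ n (fun i => v 0 i != 0) (fun i : 'I_m => i : nat) vn) => b vb bmax.
have cN := bu c uc.
have nb := bmax n vn.
have bm := ltn_ord b.
have lt : (b - c - 2 < m - 2)%N by lia.
have := congr1 (fun M : Wm m => M 0 (Ordinal lt)) hc; rewrite /= !fm_entry /=.
have -> : \sum_(i < m) \sum_(j < m) (v 0 i * u 0 j) *
   (if (i.+2 <= j)%N && ((b - c - 2)%N == (j - i - 2)%N) then 1 else 0) = 0 :> 'F_2.
  apply: big1 => i _; apply: big1 => j _.
  have [uj|uj] := eqVneq (u 0 j) 0; first by rewrite uj mulr0 mul0r.
  have := bu j uj; case: ifP; last by rewrite mulr0.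
  move/andP => [h1 /eqP h2] h3; exfalso; lia.
rewrite (bigD1 c) //= (bigD1 b) //=.
rewrite big1; last first.
  move=> j jb; have [vj|vj] := eqVneq (v 0 j) 0; first by rewrite vj mulr0 mul0r.
  have := bmax j vj; case: ifP; last by rewrite mulr0.
  move/andP => [h1 /eqP h2] h3; exfalso.
  have : (j : nat) = b by lia.
  by move/val_inj => e; rewrite e eqxx in jb.
rewrite big1; last first.
  move=> i ic; apply: big1 => j _.
  have [ui|ui] := eqVneq (u 0 i) 0; first by rewrite ui mul0r mul0r.
  have := cmin i ui.
  have [vj|vj] := eqVneq (v 0 j) 0; first by rewrite vj mulr0 mul0r.
  have := bmax j vj; case: ifP; last by rewrite mulr0.
  move/andP => [h1 /eqP h2] h3 h4; exfalso.
  have : (i : nat) = c by lia.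
  by move/val_inj => e; rewrite e eqxx in ic.
have -> : ((c.+2 <= b)%N && ((b - c - 2)%N == (b - c - 2)%N)) = true.
  by rewrite eqxx andbT; apply/leP; lia.
rewrite mulr1 addr0 addr0 => /eqP; apply/negP.
by rewrite mulf_neq0.
Qed.

Lemma walk_bound m (p : seq (Vm m)) (u : Vm m) k :
  path (@gadj m) u p -> bounded u (2 ^ k + 1) ->
  bounded (last u p) (2 ^ (k + size p) + 1).
Proof.
elim: p u k => [|v p IH] u k /=; first by rewrite addn0.
case/andP => a pp bu.
have := @step m u v (2 ^ k + 1)%N _ bu a.
have -> : maxn 2 (2 ^ k + 1).*2.-1 = (2 ^ k.+1 + 1)%N.
  rewrite expnS; have := expn_gt0 2 k; lia.
move=> bv; have {bv} bv : bounded v (2 ^ k.+1 + 1) by apply: bv; rewrite addn1.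
have := IH v k.+1 pp bv. rewrite addSnnS. done.
Qed.

Theorem lemma2p3 (d m : nat) (w : Vm m) :
  (0 < d)%N -> (3 <= m)%N -> (2 ^ d.-1 < m)%N ->
  is_vertex w -> gdist_eq (x1 m) w d ->
  forall n : 'I_m, w 0 n != 0 -> (n.+1 <= 2 ^ d.-1 + 1)%N.
Proof.
move=> d0 _ _ _ [[p [sp pp lp]] _] n wn.
case: p sp pp lp => [|v p] /=; first by move=> e; rewrite -e in d0.
move=> sp /andP [a pp] lp.
have bx : bounded (x1 m) 1.
  move=> i; rewrite mxE; by case: (i : nat).
have bv := @step m _ _ 1 isT bx a.
have bv' : bounded v (2 ^ 0 + 1) by [].
have := @walk_bound m p v 0 pp bv'; rewrite lp add0n -sp /=.
by move/(_ n wn).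
Qed.
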